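(* Let $0<\alpha<1/2$, let $M>0$ and let $k:=\prod_{p\le M}p$ (product over primes). For every positive divisor $c$ of $k$, \[ \frac{1}{k^2}\sum_{d\mid k}(c,d)^{2\alpha}\Bigl(\phi\bigl(\tfrac kc\bigr)\phi\bigl(\tfrac kd\bigr)\Bigr)^{\alpha}\bigl(\phi(c)\phi(d)\bigr)^{1-\alpha}=\prod_{p\mid k}\Bigl(\frac1p\Bigl(1-\frac1p\Bigr)+\Bigl(1-\frac1p\Bigr)^{2-2\alpha}\Bigr)\frac{c}{k}\,f\Bigl(\frac kc\Bigr). \] Moreover, \[ \frac{1}{k^2}\sum_{c,d\mid k}(c,d)^{2\alpha}\Bigl(\phi\bigl(\tfrac kc\bigr)\phi\bigl(\tfrac kd\bigr)\Bigr)^{\alpha}\bigl(\phi(c)\phi(d)\bigr)^{1-\alpha}=\prod_{p\mid k}\Bigl(p^{2\alpha-2}\Bigl(1-\frac1p\Bigr)^{2\alpha}+\frac2p\Bigl(1-\frac1p\Bigr)+\Bigl(1-\frac1p\Bigr)^{2-2\alpha}\Bigr). \]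
   Context: $\phi$ is Euler's totient function, $(c,d)$ is the greatest common divisor, sums over $d\mid k$ run over positive divisors, and products over $p$ run over primes. The multiplicative function $f$ is defined by \[ f(n):=\prod_{p\mid n}\frac{p^{2\alpha-1}\bigl(1-\frac1p\bigr)^{2\alpha}+\bigl(1-\frac1p\bigr)}{\frac1p\bigl(1-\frac1p\bigr)+\bigl(1-\frac1p\bigr)^{2-2\alpha}}. \] *)

(* Defs.v *)
From mathcomp Require Import all_boot all_order all_algebra.
From mathcomp Require Import all_classical all_reals all_analysis.
Set Implicit Arguments. Unset Strict Implicit. Unset Printing Implicit Defensive.
Import Order.TTheory GRing.Theory Num.Theory.
Local Open Scope ring_scope.

(* k = product of the primes p <= M (p ranges over 0..truncn M, which
   contains every natural number <= M; the filter p%:R <= M is exact). *)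
Definition primorial {R : realType} (M : R) : nat :=
  (\prod_(p <- iota 0 (Num.truncn M).+1 | prime p && (p%:R <= M)%R) p)%N.

Definition fmul {R : realType} (alpha : R) (n : nat) : R :=
  \prod_(p <- primes n)
    ((p%:R `^ (2 * alpha - 1) * (1 - p%:R^-1) `^ (2 * alpha) + (1 - p%:R^-1))
     / (p%:R^-1 * (1 - p%:R^-1) + (1 - p%:R^-1) `^ (2 - 2 * alpha))).

Definition summand {R : realType} (alpha : R) (k c d : nat) : R :=
  (gcdn c d)%:R `^ (2 * alpha)
  * ((totient (k %/ c))%:R * (totient (k %/ d))%:R) `^ alpha
  * ((totient c)%:R * (totient d)%:R) `^ (1 - alpha).

(* Main.v *)
Require Import Defs.
From mathcomp Require Import all_boot all_order all_algebra.
From mathcomp Require Import all_classical all_reals all_analysis.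
From mathcomp Require Import ring lra.
Import Order.TTheory GRing.Theory Num.Theory.

Definition sel (b : bool) (p : nat) : nat := if b then p else 1%N.

Lemma notdvd_prod q s (P : pred nat) : prime q -> all prime s -> q \notin s ->
  ~~ (q %| \prod_(p <- s) sel (P p) p)%N.
Proof.
move=> pq; elim: s => [|a s IH] /=; first by rewrite big_nil dvdn1 -(prime_gt1 pq) ltn_neqAle eq_sym; case: (q == 1)%N.
case/andP=> pa ps; rewrite in_cons negb_or => /andP[nqa nqs].
rewrite big_cons Euclid_dvdM // negb_or IH // andbT /sel.
case: (P a); last by rewrite dvdn1; apply/negP=> /eqP q1; move: pq; rewrite q1.
by rewrite dvdn_prime2.
Qed.

Lemma prod_pos s (P : pred nat) : all prime s -> (0 < \prod_(p <- s) sel (P p) p)%N.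
Proof.
elim: s => [|a s IH] /=; first by rewrite big_nil.
case/andP=> pa ps; rewrite big_cons muln_gt0 IH // andbT /sel; case: (P a) => //.
exact: prime_gt0.
Qed.

Lemma decomp s n : uniq s -> all prime s -> (n %| \prod_(p <- s) p)%N ->
  n = \prod_(p <- s) sel (p %| n)%N p.
Proof.
elim: s n => [|q s IH] n /=; first by rewrite !big_nil dvdn1 => _ _ /eqP.
case/andP=> qs us /andP[pq ps]; rewrite !big_cons => ndv.
have nq : ~~ (q %| \prod_(p <- s) p)%N := notdvd_prod q s predT pq ps qs.
have Hs : forall m, {in s, forall p, (p %| q * m)%N = (p %| m)%N}.
  move=> m p ins; apply: Gauss_dvdr; rewrite prime_coprime; last by move/allP: ps; apply.
  rewrite dvdn_prime2 //; last by move/allP: ps; apply.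
  by apply/negP=> /eqP e; move: qs; rewrite -e ins.
case: (boolP (q %| n)%N) => qn.
  have [m nE] : exists m, n = (q * m)%N by exists (n %/ q); rewrite mulnC divnK.
  subst n.
  have mdv : (m %| \prod_(j <- s) j)%N.
    rewrite -(dvdn_pmul2l (prime_gt0 pq)). exact: ndv.
  rewrite /=; congr (_ * _)%N.
  rewrite {1}(IH m us ps mdv); apply: eq_big_seq => p ins; by rewrite Hs.
have : (n %| \prod_(j <- s) j)%N.
  by move: ndv; rewrite Gauss_dvdr // coprime_sym prime_coprime.
by move/(IH n us ps) => {1}->; rewrite /= mul1n.
Qed.

Lemma totient_prod s (P : pred nat) : uniq s -> all prime s ->
  totient (\prod_(p <- s) sel (P p) p) = \prod_(p <- s) sel (P p) p.-1.
Proof.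
elim: s => [|q s IH] /=; first by rewrite !big_nil.
case/andP=> qs us /andP[pq ps]; rewrite !big_cons totient_coprime.
  by rewrite IH //; congr (_ * _)%N; rewrite /sel; case: (P q) => //; rewrite totient_prime.
rewrite /sel; case: (P q); last by rewrite coprime1n.
by rewrite prime_coprime // notdvd_prod.
Qed.

Lemma primes_prod s (P : pred nat) : uniq s -> all prime s ->
  perm_eq (primes (\prod_(p <- s) sel (P p) p)) [seq p <- s | P p].
Proof.
move=> us ps; apply: uniq_perm; [exact: primes_uniq | exact: filter_uniq |].
move=> q; rewrite mem_primes mem_filter prod_pos // /=.
case: (boolP (prime q)) => pq /=; last first.
  by apply/esym/negP=> /andP[_ ins]; move/allP: ps => /(_ q ins); rewrite (negbTE pq).
elim: s us ps => [|a s IH] /=; first by rewrite big_nil dvdn1 andbF; case: eqP => // q1; move: pq; rewrite q1.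
case/andP=> as_ us /andP[pa ps]; rewrite big_cons Euclid_dvdM // IH // in_cons.
rewrite /sel; case: (boolP (P a)) => Pa.
  by rewrite dvdn_prime2 //; case: eqP => [->|] //=; rewrite ?Pa.
rewrite dvdn1; have -> : (q == 1)%N = false by apply/negbTE; apply/eqP => q1; move: pq; rewrite q1.
rewrite /= andb_orr; case: (q =P a) => [e|ne] /=; last by rewrite andbF.
by rewrite e (negbTE Pa).
Qed.

Lemma divisors_perm q k : prime q -> (0 < k)%N -> ~~ (q %| k)%N ->
  perm_eq (divisors (q * k)) (divisors k ++ [seq (q * d)%N | d <- divisors k]).
Proof.
move=> pq kp nqk; have qp := prime_gt0 pq.
apply: uniq_perm; first exact: divisors_uniq.
  rewrite cat_uniq divisors_uniq map_inj_uniq ?divisors_uniq ?andbT; last by move=> a b /eqP; rewrite eqn_pmul2l // => /eqP.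
  apply/hasPn => x /mapP[d dd ->]; rewrite -dvdn_divisors //; apply/negP => /(dvdn_trans _).
  by move=> /(_ _ (dvdn_mulr d (dvdnn q))); rewrite (negbTE nqk).
move=> x; rewrite mem_cat -!dvdn_divisors ?muln_gt0 ?qp //.
apply/idP/idP.
  case: (boolP (q %| x)%N) => qx xd.
    apply/orP; right; apply/mapP; exists (x %/ q); last by rewrite mulnC divnK.
    by rewrite -dvdn_divisors // -(dvdn_pmul2l qp) mulnC divnK.
  have cxq : coprime x q by rewrite coprime_sym prime_coprime.
  by rewrite -(Gauss_dvdr k cxq) xd.
case/orP => [xk|/mapP[d dd ->]]; first by rewrite dvdn_mull.
by rewrite dvdn_pmul2l // dvdn_divisors.
Qed.
Local Open Scope ring_scope.

Lemma sum_div_prod (R : comRingType) (F : nat -> bool -> R) s : uniq s -> all prime s ->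
  \sum_(d <- divisors (\prod_(p <- s) p)) \prod_(p <- s) F p (p %| d)%N
  = \prod_(p <- s) (F p false + F p true).
Proof.
elim: s => [|q s IH] /=.
  by rewrite !big_nil (_ : divisors 1 = [:: 1%N]) // big_seq1 big_nil.
case/andP=> qs us /andP[pq ps].
have nq : ~~ (q %| \prod_(p <- s) p)%N := notdvd_prod q s predT pq ps qs.
have kp : (0 < \prod_(p <- s) p)%N := prod_pos s predT ps.
rewrite big_cons (perm_big _ (divisors_perm _ _ pq kp nq)) big_cat big_map /=.
have Hs : forall m, {in s, forall p, (p %| q * m)%N = (p %| m)%N}.
  move=> m p ins; apply: Gauss_dvdr; rewrite prime_coprime; last by move/allP: ps; apply.
  rewrite dvdn_prime2 //; last by move/allP: ps; apply.
  by apply/negP=> /eqP e; move: qs; rewrite -e ins.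
rewrite (eq_big_seq (fun d => F q false * \prod_(p <- s) F p (p %| d)%N)); last first.
  move=> d; rewrite -dvdn_divisors // => dk; rewrite big_cons; congr (F q _ * _).
  by apply/negbTE; apply: contra nq => /dvdn_trans; apply.
rewrite [X in _ + X](eq_big_seq (fun d => F q true * \prod_(p <- s) F p (p %| d)%N)); last first.
  move=> d _; rewrite big_cons dvdn_mulr //; congr (_ * _).
  by apply: eq_big_seq => p ins; rewrite Hs.
by rewrite -!big_distrr /= IH // big_cons mulrDl.
Qed.
Section S.
Variable R : realType.
Implicit Types (x y z a r : R).
Lemma pE y r : 0 < y -> y `^ r = expR (r * ln y).
Proof. by move=> y0; rewrite /powR gt_eqF. Qed.
Lemma pV y r : 0 < y -> (y^-1) `^ r = (y `^ r)^-1.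
Proof. by move=> y0; rewrite !pE ?invr_gt0 // lnV ?posrE // mulrN expRN. Qed.
Lemma pDiv y z r : 0 < y -> 0 < z -> (y / z) `^ r = y `^ r / z `^ r.
Proof. by move=> y0 z0; rewrite powRM ?pV ?ltW ?invr_gt0. Qed.
Lemma p2 y : 0 < y -> y `^ 2 = y ^+ 2.
Proof. by move=> y0; rewrite -powR_mulrn ?ltW. Qed.
Lemma pA y a : 0 < y -> y `^ (2 - 2 * a) = y ^+ 2 / y `^ (2 * a).
Proof. by move=> y0; rewrite powRB ?(gt_eqF y0) ?implybT // p2. Qed.
Lemma pB y a : 0 < y -> y `^ (2 * a - 1) = y `^ (2 * a) / y.
Proof. by move=> y0; rewrite powRB ?(gt_eqF y0) ?implybT // powRr1 ?ltW. Qed.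
Lemma pC y a : 0 < y -> y `^ (2 * a - 2) = y `^ (2 * a) / y ^+ 2.
Proof. by move=> y0; rewrite powRB ?(gt_eqF y0) ?implybT //; rewrite p2. Qed.
Lemma pSq y r : 0 < y -> (y * y) `^ r = y `^ (2 * r).
Proof. by move=> y0; rewrite powRM ?ltW // -powRD ?(gt_eqF y0) ?implybT // mulr2n -mulr2n mulr_natl. Qed.
Lemma pOne y a : 0 < y -> y `^ a * y `^ (1 - a) = y.
Proof. by move=> y0; rewrite -powRD ?(gt_eqF y0) ?implybT // addrC subrK powRr1 ?ltW. Qed.
End S.

Definition hloc {R : realType} (alpha : R) (p : nat) (b1 b2 : bool) : R :=
  (sel (b1 && b2) p)%:R `^ (2 * alpha)
  * ((sel (~~ b1) p.-1)%:R * (sel (~~ b2) p.-1)%:R) `^ alpha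
  * ((sel b1 p.-1)%:R * (sel b2 p.-1)%:R) `^ (1 - alpha).

Section S.
Variable R : realType.
Variable a : R.
Variable p : nat.
Hypothesis pp : prime p.
Let x : R := p%:R.
Let x1 : 1 < x.
Proof. by rewrite /x ltr1n prime_gt1. Qed.
Let x0 : 0 < x. Proof. exact: lt_trans x1. Qed.
Let y0 : 0 < x - 1. Proof. by rewrite subr_gt0. Qed.
Let ey : (p.-1)%:R = x - 1 :> R.
Proof. by rewrite -subn1 natrB ?prime_gt0. Qed.
Let e1 : (1%N)%:R = 1 :> R. Proof. by []. Qed.

Lemma hTF : hloc a p true false = x - 1.
Proof. by rewrite /hloc /sel /= ey e1 ?powR1 !mul1r ?mulr1 pOne. Qed.
Lemma hFT : hloc a p false true = x - 1.
Proof. by rewrite /hloc /sel /= ey e1 ?powR1 !mul1r ?mulr1 pOne. Qed.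
Lemma hTT : hloc a p true true = x `^ (2 * a) * ((x - 1) ^+ 2 / (x - 1) `^ (2 * a)).
Proof. by rewrite /hloc /sel /= -/x ey e1 ?mul1r ?powR1 ?mulr1 pSq // mulrBr mulr1 pA. Qed.
Lemma hFF : hloc a p false false = (x - 1) `^ (2 * a).
Proof. by rewrite /hloc /sel /= ey e1 ?mul1r ?powR1 ?mulr1 pSq // mul1r. Qed.

Let e2 : 1 - x^-1 = (x - 1) / x.
Proof. by rewrite mulrBl divff ?gt_eqF // mul1r. Qed.

Definition gp := x^-1 * (1 - x^-1) + (1 - x^-1) `^ (2 - 2 * a).

Lemma gp_gt0 : 0 < gp.
Proof.
rewrite /gp; apply: ltr_pwDl; last exact: powR_ge0.
by rewrite e2 mulr_gt0 ?divr_gt0 ?invr_gt0.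
Qed.

Lemma id1 : (x^-1 * x^-1) * (hloc a p true false + hloc a p true true) = gp.
Proof.
rewrite hTF hTT /gp e2 pDiv // !pA //.
have u0 : x `^ (2 * a) != 0 by rewrite gt_eqF // powR_gt0.
have v0 : (x - 1) `^ (2 * a) != 0 by rewrite gt_eqF // powR_gt0.
field. by rewrite u0 v0 gt_eqF.
Qed.

Definition rp := (x `^ (2 * a - 1) * (1 - x^-1) `^ (2 * a) + (1 - x^-1)) / gp.

Lemma id2 : (x^-1 * x^-1) * (hloc a p false false + hloc a p false true) = gp * (1%:R / x) * rp.
Proof.
have g0 : gp != 0 by rewrite gt_eqF // gp_gt0.
rewrite /rp; move: g0; set g := gp => g0.
rewrite hFF hFT e2 pDiv // !pB //.
have u0 : x `^ (2 * a) != 0 by rewrite gt_eqF // powR_gt0.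
have v0 : (x - 1) `^ (2 * a) != 0 by rewrite gt_eqF // powR_gt0.
field. by rewrite u0 g0 gt_eqF.
Qed.

Lemma id3 : (x^-1 * x^-1) * ((hloc a p false false + hloc a p false true)
   + (hloc a p true false + hloc a p true true)) =
  x `^ (2 * a - 2) * (1 - x^-1) `^ (2 * a) + 2 / x * (1 - x^-1) + (1 - x^-1) `^ (2 - 2 * a).
Proof.
rewrite hFF hFT hTF hTT e2 !pDiv // !pA // pC //.
have u0 : x `^ (2 * a) != 0 by rewrite gt_eqF // powR_gt0.
have v0 : (x - 1) `^ (2 * a) != 0 by rewrite gt_eqF // powR_gt0.
field. by rewrite u0 v0 gt_eqF.
Qed.
End S.

Lemma powR_prod (R : realType) (F : nat -> R) s r : (forall i, 0 <= F i) ->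
  (\prod_(i <- s) F i) `^ r = \prod_(i <- s) (F i `^ r).
Proof.
move=> F0; elim: s => [|i s IH]; first by rewrite !big_nil powR1.
by rewrite !big_cons powRM // ?IH // prodr_ge0.
Qed.

Lemma div_prod s c : uniq s -> all prime s -> (c %| \prod_(p <- s) p)%N ->
  (\prod_(p <- s) p %/ c)%N = \prod_(p <- s) sel (~~ (p %| c))%N p.
Proof.
move=> us ps ck.
have cp : (0 < c)%N := dvdn_gt0 (prod_pos s predT ps) ck.
have e : (c * \prod_(p <- s) sel (~~ (p %| c))%N p)%N = \prod_(p <- s) p.
  rewrite {1}(decomp s c us ps ck) -big_split /=; apply: eq_bigr => p _.
  by rewrite /sel; case: (p %| c)%N => /=; rewrite ?muln1 ?mul1n.
by rewrite -e mulKn.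
Qed.

Lemma summand_prod (R : realType) (alpha : R) s c d : uniq s -> all prime s ->
  (c %| \prod_(p <- s) p)%N -> (d %| \prod_(p <- s) p)%N ->
  summand alpha (\prod_(p <- s) p) c d
  = \prod_(p <- s) hloc alpha p (p %| c)%N (p %| d)%N.
Proof.
move=> us ps ck dk.
have eg : gcdn c d = \prod_(p <- s) sel ((p %| c) && (p %| d))%N p.
  rewrite {1}(decomp s (gcdn c d) us ps (dvdn_trans (dvdn_gcdl c d) ck)).
  by apply: eq_bigr => p _; rewrite dvdn_gcd.
have tc : forall e, (e %| \prod_(p <- s) p)%N -> totient e = \prod_(p <- s) sel (p %| e)%N p.-1.
  by move=> e ek; rewrite {1}(decomp s e us ps ek) totient_prod.
have tkc : forall e, (e %| \prod_(p <- s) p)%N ->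
    totient (\prod_(p <- s) p %/ e) = \prod_(p <- s) sel (~~ (p %| e))%N p.-1.
  by move=> e ek; rewrite div_prod // totient_prod.
rewrite /summand eg (tkc c ck) (tkc d dk) (tc c ck) (tc d dk) !natr_prod -!big_split /=.
rewrite !powR_prod; try by move=> i; rewrite ?mulr_ge0 ?ler0n.
by rewrite -!big_split.
Qed.

Lemma invsq (R : realType) s : uniq s -> all prime s ->
  (((\prod_(p <- s) p)%N)%:R ^+ 2 : R)^-1 = \prod_(p <- s) (p%:R^-1 * p%:R^-1).
Proof.
move=> _ _; rewrite natr_prod expr2 -big_split /= -prodfV.
by apply: eq_bigr => p _; rewrite invfM.
Qed.

Theorem lemma6 (R : realType) (alpha M : R) (k : nat) :
  0 < alpha -> alpha < 1 / 2 -> 0 < M -> k = primorial M ->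
  (forall c : nat, (0 < c)%N -> (c %| k)%N ->
     (k%:R ^+ 2)^-1 * \sum_(d <- divisors k) summand alpha k c d
     = (\prod_(p <- primes k)
          (p%:R^-1 * (1 - p%:R^-1) + (1 - p%:R^-1) `^ (2 - 2 * alpha)))
       * (c%:R / k%:R) * fmul alpha (k %/ c)) /\
  (k%:R ^+ 2)^-1 * \sum_(c <- divisors k) \sum_(d <- divisors k) summand alpha k c d
  = \prod_(p <- primes k)
      (p%:R `^ (2 * alpha - 2) * (1 - p%:R^-1) `^ (2 * alpha)
       + 2 / p%:R * (1 - p%:R^-1) + (1 - p%:R^-1) `^ (2 - 2 * alpha)).
Proof.
move=> _ _ _ kE.
have [s [us ps ks]] : exists s, [/\ uniq s, all prime s & k = \prod_(p <- s) p].
  exists [seq p <- iota 0 (Num.truncn M).+1 | prime p && (p%:R <= M)]; split.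
  - by rewrite filter_uniq // iota_uniq.
  - by apply/allP => p; rewrite mem_filter => /andP[/andP[]].
  - by rewrite kE /primorial big_filter.
have pk : perm_eq (primes k) s.
  by have := primes_prod s predT us ps; rewrite filter_predT ks.
rewrite !(perm_big _ pk) /=.
have kdiv : forall d, d \in divisors k -> (d %| \prod_(p <- s) p)%N.
  by move=> d; rewrite -dvdn_divisors ?ks ?(prod_pos s predT ps).
rewrite ks in kdiv *.
split.
  move=> c _ ck.
  rewrite (eq_big_seq (fun d => \prod_(p <- s) hloc alpha p (p %| c)%N (p %| d)%N)); last first.
    by move=> d /kdiv dk; rewrite summand_prod.
  have := sum_div_prod _ (fun p b => hloc alpha p (p %| c)%N b) s us ps; rewrite /= => ->.
  rewrite invsq // -big_split /=.
  have cE : c%:R = \prod_(p <- s) (sel (p %| c)%N p)%:R :> R.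
    by rewrite {1}(decomp s c us ps ck) natr_prod.
  rewrite cE natr_prod -prodfV -big_split /fmul div_prod //.
  rewrite (perm_big _ (primes_prod s _ us ps)) big_filter [\prod_(i <- s | ~~ _) _]big_mkcond -!big_split /=.
  apply: eq_big_seq => p ins.
  have pp : prime p by move/allP: ps; apply.
  case: (p %| c)%N => /=.
    by rewrite (id1 _ _ _ pp) /gp divff ?mulr1 // pnatr_eq0 -lt0n prime_gt0.
  exact: (id2 _ _ _ pp).
rewrite (eq_big_seq (fun c => \prod_(p <- s) (hloc alpha p (p %| c)%N false + hloc alpha p (p %| c)%N true))); last first.
  move=> c /kdiv ck.
  rewrite [LHS](eq_big_seq (fun d => \prod_(p <- s) hloc alpha p (p %| c)%N (p %| d)%N)); last first.
    by move=> d /kdiv dk; rewrite summand_prod.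
  by have := sum_div_prod _ (fun p b => hloc alpha p (p %| c)%N b) s us ps; rewrite /= => ->.
have := sum_div_prod _ (fun p b => hloc alpha p b false + hloc alpha p b true) s us ps; rewrite /= => ->.
rewrite invsq // -big_split /=.
apply: eq_big_seq => p ins.
have pp : prime p by move/allP: ps; apply.
exact: (id3 _ _ _ pp).
Qed.
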